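(* Let $f_0, g_0, \omega > 0$, let $p,q>0$ with $pq>1$, and let $C_p, C_q > 0$. Let $T>0$ and let $(f,g) \in \big(C^1([0,T))\big)^2$ be non-negative functions solving \[ \begin{cases} \frac{d}{dt} f(t) + \frac{\omega}{q+1} f(t) = (p+1) C_p\, g(t)^p, & t \in [0,T),\\ \frac{d}{dt} g(t) + \frac{\omega}{p+1} g(t) = (q+1) C_q\, f(t)^q, & t \in [0,T),\\ f(0) = f_0,\quad g(0) = g_0. \end{cases} \] Then for all $0 \le t < T$, \[ C_q f(t)^{q+1} e^{\omega t} - C_q f_0^{q+1} = C_p g(t)^{p+1} e^{\omega t} - C_p g_0^{p+1}. \] Moreover, if \[ \max\Big( 2^{\frac{p+1}{q+1}\frac{pq}{pq-1}} (q+1)^{-\frac{p+1}{pq-1}} (p+1)^{-\frac{p+1}{pq-1}} \omega^{\frac{p+1}{pq-1}} C_p^{-\frac{1}{pq-1}} C_q^{-\frac{p}{pq-1}},\ C_q^{-\frac{1}{q+1}} C_p^{\frac{1}{q+1}} g_0^{\frac{p+1}{q+1}} \Big) < f_0, \] then for all $0 \le t < T$, \[ e^{\frac{\omega}{p+1} t} g(t) \ge \Big\{ \Big(\frac{C_p}{C_q}\Big)^{\frac{pq-1}{(p+1)(q+1)}} f_0^{-\frac{pq-1}{p+1}} - 2^{-\frac{pq}{q+1}} (q+1)(p+1)\omega^{-1} C_q^{\frac{1}{q+1}} C_p^{\frac{q}{q+1}} \Big(1 - e^{-\frac{\omega(pq-1)}{(p+1)(q+1)} t}\Big) \Big\}^{-\frac{q+1}{pq-1}}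 - \big( C_q C_p^{-1} f_0^{q+1} - g_0^{p+1} \big)^{\frac{1}{p+1}}, \] and \[ T \le -\frac{(q+1)(p+1)}{\omega(pq-1)} \log\Big( 1 - \frac{2^{\frac{pq}{q+1}}}{(q+1)(p+1)}\, \omega\, C_q^{-\frac{p}{p+1}} C_p^{-\frac{1}{p+1}} f_0^{-\frac{pq-1}{p+1}} \Big). \] *)

(* Defs.v *)
From HB Require Import structures.
From mathcomp Require Import all_boot all_order all_algebra.
From mathcomp Require Import all_classical all_reals all_analysis.
Set Implicit Arguments. Unset Strict Implicit. Unset Printing Implicit Defensive.
Import Order.TTheory GRing.Theory Num.Theory.
Import numFieldNormedType.Exports.
Local Open Scope classical_set_scope.
Local Open Scope ring_scope.

Definition C1_Ico {R : realType} (T : R) (f f' : R -> R) : Prop :=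
  (forall t, 0 < t < T -> is_derive t 1 f (f' t)) /\
  ((fun h => h^-1 * (f h - f 0)) @ at_right 0 --> f' 0) /\
  {within `[0, T[, continuous f'}.

(* Main.v *)
Require Import Defs.
From HB Require Import structures.
From mathcomp Require Import all_boot all_order all_algebra.
From mathcomp Require Import all_classical all_reals all_analysis.
From mathcomp Require Import ring lra.
Import Order.TTheory GRing.Theory Num.Theory.
Import numFieldNormedType.Exports.
Local Open Scope classical_set_scope.
Local Open Scope ring_scope.
Set Implicit Arguments. Unset Strict Implicit.
Section Helpers.
Context {R : realType}.

Lemma powRE (x a : R) : 0 < x -> x `^ a = expR (a * ln x).
Proof. by move=> x0; rewrite /powR gt_eqF. Qed.

Lemma is_derive_cont (h : R -> R) (x d : R) : is_derive x 1 h d -> {for x, continuous h}.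
Proof. by move=> [dh _]; apply/differentiable_continuous/derivable1_diffP. Qed.

Lemma DM (a b : R -> R) (x da db : R) : is_derive x 1 a da -> is_derive x 1 b db ->
  is_derive x 1 (fun t => a t * b t) (da * b x + a x * db).
Proof.
move=> ha hb; have h := is_deriveM ha hb.
have e : a x *: db + b x *: da = da * b x + a x * db.
  by rewrite /GRing.scale /= addrC mulrC.
by rewrite e in h.
Qed.

Lemma DD (a b : R -> R) (x da db : R) : is_derive x 1 a da -> is_derive x 1 b db ->
  is_derive x 1 (fun t => a t + b t) (da + db).
Proof. by move=> ha hb; have := is_deriveD ha hb. Qed.

Lemma DB (a b : R -> R) (x da db : R) : is_derive x 1 a da -> is_derive x 1 b db ->
  is_derive x 1 (fun t => a t - b t) (da - db).
Proof. by move=> ha hb; have := is_deriveB ha hb. Qed.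

Lemma DC (a : R -> R) (c x da : R) : is_derive x 1 a da ->
  is_derive x 1 (fun t => c * a t) (c * da).
Proof. by move=> ha; have := is_deriveZ c ha. Qed.

Lemma Dcst (c x : R) : is_derive x 1 (fun _ : R => c) 0.
Proof. exact: is_derive_cst. Qed.

Lemma Dexp (k x : R) : is_derive x 1 (fun t => expR (k * t)) (k * expR (k * x)).
Proof.
have h1 : is_derive x 1 (fun t => k * t) k.
  by have := @DC id k x 1 (is_derive_id x 1); rewrite mulr1.
have := is_derive1_comp (is_derive_expR (k * x)) h1.
by rewrite mulrC.
Qed.

Lemma Dpow (a : R -> R) (r x da : R) : 0 < a x -> is_derive x 1 a da ->
  is_derive x 1 (fun t => a t `^ r) (r * a x `^ (r - 1) * da).
Proof.
move=> ax ha; have := is_derive1_comp (is_derive1_powR r ax) ha.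
done.
Qed.

Lemma mono0 (phi dphi : R -> R) (T : R) :
  (forall t, 0 < t < T -> is_derive t 1 phi (dphi t)) ->
  (forall t, 0 < t < T -> 0 <= dphi t) ->
  phi x @[x --> 0^'+] --> phi 0 ->
  forall t, 0 <= t < T -> phi 0 <= phi t.
Proof.
move=> hd hpos hc t /andP[]; rewrite le_eqVlt => /orP[/eqP<- _|t0 tT]; first by [].
have key : forall s, 0 < s <= t -> phi s <= phi t.
  move=> s /andP[s0 st].
  apply: (@ger0_derive1_le_oo _ phi 0 T) => //.
  - by move=> y; rewrite in_itv /= => hy; have [] := hd y hy.
  - move=> y; rewrite in_itv /= => hy; have hdy := hd y hy.
    by rewrite derive1E derive_val; exact: hpos.
  - by move=> y; rewrite inE /= in_itv/= => hy; exact: is_derive_cont (hd y hy).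
  - by rewrite in_itv /= s0 (le_lt_trans st tT).
  - by rewrite in_itv /= t0 tT.
apply: (ler_cvg_to hc (cvg_cst (phi t))).
near=> s; apply: key; apply/andP; split.
  by near: s; exact: nbhs_right_gt.
by apply/ltW; near: s; exact: nbhs_right_lt.
Unshelve. all: end_near. Qed.

Lemma rc_of_C1 (f : R -> R) (d : R) :
  ((fun h => h^-1 * (f h - f 0)) @ at_right (0:R) --> d) -> f x @[x --> (0:R)^'+] --> f 0.
Proof.
move=> hq.
have h1 : (fun h => f 0 + h * (h^-1 * (f h - f 0))) @ at_right (0:R) --> f 0 + 0 * d.
  apply: cvgD; first exact: cvg_cst.
  apply: cvgM => //; exact: (cvg_at_right_filter cvg_id).
rewrite mul0r addr0 in h1.
apply: cvg_trans h1; apply: near_eq_cvg; near=> h.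
rewrite mulrA mulfV ?mul1r; first by rewrite addrC subrK.
by apply: lt0r_neq0; near: h; exact: nbhs_right_gt.
Unshelve. all: end_near. Qed.

Lemma subadd (a b r : R) : 0 < a -> 0 < b -> 1 <= r ->
  a `^ r + b `^ r <= (a + b) `^ r.
Proof.
move=> a0 b0 r1; set s := a + b.
have s0 : 0 < s by rewrite addr_gt0.
have ea : a = (a / s) * s by rewrite divfK ?gt_eqF.
have eb : b = (b / s) * s by rewrite divfK ?gt_eqF.
have ha : (a / s) `^ r <= a / s.
  apply: ge1r_powR => //; rewrite divr_gt0 //= ler_pdivrMr // mul1r.
  by rewrite /s lerDl ltW.
have hb : (b / s) `^ r <= b / s.
  apply: ge1r_powR => //; rewrite divr_gt0 //= ler_pdivrMr // mul1r.
  by rewrite /s lerDr ltW.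
have A0 : 0 <= a / s by rewrite divr_ge0 ?ltW.
have B0 : 0 <= b / s by rewrite divr_ge0 ?ltW.
rewrite {1}ea {1}eb (powRM _ A0 (ltW s0)) (powRM _ B0 (ltW s0)).
apply: (le_trans (lerD (ler_wpM2r (powR_ge0 _ _) ha) (ler_wpM2r (powR_ge0 _ _) hb))).
by rewrite -mulrDl -mulrDl divff ?gt_eqF // mul1r.
Qed.

Lemma half_convex (a b r : R) : 0 <= a -> 0 <= b -> 1 <= r ->
  ((a + b) / 2) `^ r <= (a `^ r + b `^ r) / 2.
Proof.
move=> a0 b0 r1.
have h2a : (0:R) <= 2^-1 by rewrite invr_ge0.
have h2b : (2:R)^-1 <= 1 by rewrite invf_le1 // ler1n.
have := convex_powR r1 (Itv01 h2a h2b) (x:=a) (y:=b).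
rewrite !inE /= !in_itv /= !andbT => /(_ a0 b0).
move=> h; cbn in h.
have e : unstable.onem (2^-1 : R) = 2^-1 by rewrite /unstable.onem; field.
rewrite e in h.
have -> : (a + b) / 2 = 2^-1 * a + 2^-1 * b by field.
have -> : (a `^ r + b `^ r) / 2 = 2^-1 * a `^ r + 2^-1 * b `^ r by field.
exact: h.
Qed.

End Helpers.
Unset Implicit Arguments.
Ltac pos := solve [rewrite ?posrE; repeat first [assumption | apply: mulr_gt0 | apply: addr_gt0 | apply: powR_gt0 | apply: expR_gt0 | rewrite invr_gt0]].
Ltac lnx := repeat first [ rewrite expRK | rewrite ln_powR | (rewrite lnM; [|pos|pos]) | (rewrite lnV; [|pos]) ].

Lemma rc_cont (R : realType) (h : R -> R) (d : R) : is_derive (0:R) 1 h d -> h x @[x --> (0:R)^'+] --> h 0.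
Proof. by move=> hd; apply: cvg_at_right_filter; exact: is_derive_cont hd. Qed.

Lemma rc_pow (R : realType) (f : R -> R) (a : R) : 0 < f 0 -> f x @[x --> (0:R)^'+] --> f 0 ->
  (fun t => f t `^ a) x @[x --> (0:R)^'+] --> f 0 `^ a.
Proof.
move=> f0 hf; have hc := is_derive_cont (is_derive1_powR a f0).
by apply: (continuous_cvg _ hc hf).
Qed.

Lemma lin_le (R : realType) (k a b x y : R) : 0 <= k -> a <= b -> y - x = k * (b - a) -> x <= y.
Proof. by move=> k0 ab e; rewrite -subr_ge0 e mulr_ge0 // subr_ge0. Qed.

Lemma lin_lt (R : realType) (k a b x y : R) : 0 < k -> a < b -> y - x = k * (b - a) -> x < y.
Proof. by move=> k0 ab e; rewrite -subr_gt0 e mulr_gt0 // subr_gt0. Qed.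

Theorem corollary2p4 (R : realType) (f0 g0 w p q Cp Cq T : R)
  (f g f' g' : R -> R) :
  0 < f0 -> 0 < g0 -> 0 < w -> 0 < p -> 0 < q -> 1 < p * q ->
  0 < Cp -> 0 < Cq -> 0 < T ->
  C1_Ico T f f' -> C1_Ico T g g' ->
  (forall t, 0 <= t < T -> 0 <= f t) ->
  (forall t, 0 <= t < T -> 0 <= g t) ->
  (forall t, 0 <= t < T ->
     f' t + w / (q + 1) * f t = (p + 1) * Cp * g t `^ p) ->
  (forall t, 0 <= t < T ->
     g' t + w / (p + 1) * g t = (q + 1) * Cq * f t `^ q) ->
  f 0 = f0 -> g 0 = g0 ->
  (forall t, 0 <= t < T ->
     Cq * f t `^ (q + 1) * expR (w * t) - Cq * f0 `^ (q + 1)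
     = Cp * g t `^ (p + 1) * expR (w * t) - Cp * g0 `^ (p + 1)) /\
  (Num.max
     (2 `^ ((p + 1) / (q + 1) * ((p * q) / (p * q - 1)))
      * (q + 1) `^ (- ((p + 1) / (p * q - 1)))
      * (p + 1) `^ (- ((p + 1) / (p * q - 1)))
      * w `^ ((p + 1) / (p * q - 1))
      * Cp `^ (- (1 / (p * q - 1)))
      * Cq `^ (- (p / (p * q - 1))))
     (Cq `^ (- (1 / (q + 1))) * Cp `^ (1 / (q + 1))
      * g0 `^ ((p + 1) / (q + 1)))
   < f0 ->
   (forall t, 0 <= t < T ->
      expR (w / (p + 1) * t) * g t >=
      ((Cp / Cq) `^ ((p * q - 1) / ((p + 1) * (q + 1)))
         * f0 `^ (- ((p * q - 1) / (p + 1)))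
       - 2 `^ (- ((p * q) / (q + 1))) * (q + 1) * (p + 1) * w^-1
         * Cq `^ (1 / (q + 1)) * Cp `^ (q / (q + 1))
         * (1 - expR (- (w * (p * q - 1) / ((p + 1) * (q + 1))) * t)))
        `^ (- ((q + 1) / (p * q - 1)))
      - (Cq * Cp^-1 * f0 `^ (q + 1) - g0 `^ (p + 1)) `^ (1 / (p + 1))) /\
   T <= - ((q + 1) * (p + 1) / (w * (p * q - 1)))
          * ln (1 - 2 `^ ((p * q) / (q + 1)) / ((q + 1) * (p + 1)) * w
                    * Cq `^ (- (p / (p + 1))) * Cp `^ (- (1 / (p + 1)))
                    * f0 `^ (- ((p * q - 1) / (p + 1))))).
Proof.
move=> f0p g0p wp pp qp pq1 Cpp Cqp Tp [fd [fr _]] [gd [gr _]] fnn gnn ef eg ef0 eg0.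
have q1 : 0 < q + 1 by rewrite addr_gt0.
have p1 : 0 < p + 1 by rewrite addr_gt0.
have pqm : 0 < p * q - 1 by rewrite subr_gt0.
have two0 : (0:R) < 2 by [].
have frc := rc_of_C1 fr; have grc := rc_of_C1 gr.
rewrite ef0 in frc; rewrite eg0 in grc.
have ltW' : forall t, 0 < t < T -> 0 <= t < T.
  by move=> t /andP[t0 tT]; rewrite (ltW t0) tT.
have fpos : forall t, 0 <= t < T -> 0 < f t.
  move=> t ht.
  have D1 : forall s, 0 < s < T -> is_derive s 1 (fun t => expR (w / (q + 1) * t) * f t)
    (expR (w / (q + 1) * s) * ((p + 1) * Cp * g s `^ p)).
    move=> s hs; apply: (is_derive_eq (DM (Dexp _ s) (fd s hs))).
    by rewrite -(ef s (ltW' _ hs)); ring.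
  have D2 : forall s, 0 < s < T -> 0 <= expR (w / (q + 1) * s) * ((p + 1) * Cp * g s `^ p).
    by move=> s hs; rewrite mulr_ge0 ?expR_ge0 // mulr_ge0 ?powR_ge0 // mulr_ge0 ?ltW.
  have C3 : (fun t => expR (w / (q + 1) * t) * f t) x @[x --> 0^'+] --> expR (w / (q + 1) * 0) * f 0.
    apply: cvgM => //; last by rewrite ef0.
    exact: rc_cont (Dexp (w / (q + 1)) 0).
  have := mono0 D1 D2 C3 ht.
  rewrite /= mulr0 expR0 mul1r ef0 => h.
  have h2 : 0 < expR (w / (q + 1) * t) * f t by exact: lt_le_trans f0p h.
  by rewrite pmulr_rgt0 ?expR_gt0 in h2.
have gpos : forall t, 0 <= t < T -> 0 < g t.
  move=> t ht.
  have D1 : forall s, 0 < s < T -> is_derive s 1 (fun t => expR (w / (p + 1) * t) * g t)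
    (expR (w / (p + 1) * s) * ((q + 1) * Cq * f s `^ q)).
    move=> s hs; apply: (is_derive_eq (DM (Dexp _ s) (gd s hs))).
    by rewrite -(eg s (ltW' _ hs)); ring.
  have D2 : forall s, 0 < s < T -> 0 <= expR (w / (p + 1) * s) * ((q + 1) * Cq * f s `^ q).
    by move=> s hs; rewrite mulr_ge0 ?expR_ge0 // mulr_ge0 ?powR_ge0 // mulr_ge0 ?ltW.
  have C3 : (fun t => expR (w / (p + 1) * t) * g t) x @[x --> 0^'+] --> expR (w / (p + 1) * 0) * g 0.
    apply: cvgM => //; last by rewrite eg0.
    exact: rc_cont (Dexp (w / (p + 1)) 0).
  have := mono0 D1 D2 C3 ht.
  rewrite /= mulr0 expR0 mul1r eg0 => h.
  have h2 : 0 < expR (w / (p + 1) * t) * g t by exact: lt_le_trans g0p h.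
  by rewrite pmulr_rgt0 ?expR_gt0 in h2.
pose phi t := Cq * f t `^ (q + 1) * expR (w * t) - Cp * g t `^ (p + 1) * expR (w * t).
have Dphi : forall s, 0 < s < T -> is_derive s 1 phi 0.
  move=> s hs; have hs' := ltW' _ hs.
  apply: (is_derive_eq (DB (DM (DC Cq (Dpow (q + 1) (fpos s hs') (fd s hs))) (Dexp w s))
                          (DM (DC Cp (Dpow (p + 1) (gpos s hs') (gd s hs))) (Dexp w s)))).
  rewrite !addrK.
  have ef1 : f' s = (p + 1) * Cp * g s `^ p - w / (q + 1) * f s by rewrite -(ef s hs') addrK.
  have eg1 : g' s = (q + 1) * Cq * f s `^ q - w / (p + 1) * g s by rewrite -(eg s hs') addrK.
  rewrite ef1 eg1.
  rewrite (@powRD _ (f s) q 1) ?(gt_eqF (fpos s hs')) ?implybT // (@powRD _ (g s) p 1) ?(gt_eqF (gpos s hs')) ?implybT //.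
  rewrite !powRr1 ?(ltW (fpos s hs')) ?(ltW (gpos s hs')) //.
  by field; rewrite ?gt_eqF.
have Cphi : phi x @[x --> 0^'+] --> phi 0.
  rewrite /phi; apply: cvgB; apply: cvgM; try apply: cvgM.
  - exact: cvg_cst.
  - by apply: rc_pow; rewrite ?ef0 ?eg0.
  - exact: rc_cont (Dexp w 0).
  - exact: cvg_cst.
  - by apply: rc_pow; rewrite ?ef0 ?eg0.
  - exact: rc_cont (Dexp w 0).
have Cphin : (fun t => - phi t) x @[x --> 0^'+] --> - phi 0 by apply: cvgN.
have Dphin : forall s, 0 < s < T -> is_derive s 1 (fun t => - phi t) 0.
  move=> s hs; have h := is_deriveN (Dphi s hs); rewrite oppr0 in h; exact: h.
have Id : forall t, 0 <= t < T ->
     Cq * f t `^ (q + 1) * expR (w * t) - Cq * f0 `^ (q + 1)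
     = Cp * g t `^ (p + 1) * expR (w * t) - Cp * g0 `^ (p + 1).
  move=> t ht.
  have h1 := mono0 Dphi (fun _ _ => lexx 0) Cphi ht.
  have h2 := mono0 Dphin (fun _ _ => lexx 0) Cphin ht.
  have : phi t = phi 0 by apply/eqP; rewrite eq_le h1 andbT -lerN2.
  rewrite /phi mulr0 expR0 !mulr1 ef0 eg0 => e.
  move: e; lra.
split; first exact: Id.
move=> Hmax; move: Hmax; rewrite gt_max => /andP[H1 H2].
set K := Cq * Cp^-1 * f0 `^ (q + 1) - g0 `^ (p + 1).
set k := K `^ (1 / (p + 1)).
set A := (Cp / Cq) `^ ((p * q - 1) / ((p + 1) * (q + 1))) * f0 `^ (- ((p * q - 1) / (p + 1))).
set B := 2 `^ (- ((p * q) / (q + 1))) * (q + 1) * (p + 1) * w^-1 * Cq `^ (1 / (q + 1)) * Cp `^ (q / (q + 1)).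
set M := 2 `^ ((p * q) / (q + 1)) / ((q + 1) * (p + 1)) * w * Cq `^ (- (p / (p + 1))) * Cp `^ (- (1 / (p + 1))) * f0 `^ (- ((p * q - 1) / (p + 1))).
set c := w * (p * q - 1) / ((p + 1) * (q + 1)).
set c2 := w / (p + 1).
pose b1 := (p * q - 1) / (q + 1).
have Kp : 0 < K.
  move: H2; rewrite -ltr_ln; [|pos|pos]; lnx => h.
  rewrite /K subr_gt0 -ltr_ln; [|pos|pos]; lnx.
  apply: (@lin_lt _ (q + 1) _ _ _ _ q1 h).
  by field; rewrite gt_eqF.
have kp : 0 < k by apply: powR_gt0.
have p1ge : 1 <= p + 1 by rewrite lerDr ltW.
have kK : k `^ (p + 1) = K.
  rewrite /k -powRrM (_ : 1 / (p + 1) * (p + 1) = 1) ?powRr1 ?ltW //.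
  by field; rewrite gt_eqF.
pose u t := expR (c2 * t) * g t + k.
have upos : forall t, 0 <= t < T -> 0 < u t.
  by move=> t ht; rewrite /u addr_gt0 // mulr_gt0 ?expR_gt0 ?gpos.
have star : forall t, 0 <= t < T ->
    (p + 1) * ln (u t) <= p * ln 2 + ln Cq - ln Cp + (q + 1) * ln (f t) + w * t.
  move=> t ht; have gt := gpos t ht; have ft := fpos t ht.
  have Gp : 0 < expR (c2 * t) * g t by rewrite mulr_gt0 ?expR_gt0.
  have hc := half_convex (ltW Gp) (ltW kp) p1ge.
  have eG : (expR (c2 * t) * g t) `^ (p + 1) = expR (w * t) * g t `^ (p + 1).
    rewrite powRM ?expR_ge0 ?(ltW gt) // -expRM /c2.
    by congr (expR _ * _); field; rewrite gt_eqF.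
  have eS : expR (w * t) * g t `^ (p + 1) + K = Cq * Cp^-1 * f t `^ (q + 1) * expR (w * t).
    have e := Id t ht.
    apply/eqP; rewrite -subr_eq0; apply/eqP.
    have -> : expR (w * t) * g t `^ (p + 1) + K - Cq * Cp^-1 * f t `^ (q + 1) * expR (w * t)
      = Cp^-1 * ((Cp * g t `^ (p + 1) * expR (w * t) - Cp * g0 `^ (p + 1))
         - (Cq * f t `^ (q + 1) * expR (w * t) - Cq * f0 `^ (q + 1))).
      by rewrite /K; field; rewrite gt_eqF.
    by rewrite e subrr mulr0.
  rewrite kK eG eS in hc.
  rewrite -ler_ln in hc; [|pos|pos]; move: hc; lnx => h.
  rewrite /u; apply: (@lin_le _ 1 _ _ _ _ ler01 h).
  by field.
have b1p : 0 < b1 by rewrite /b1 divr_gt0.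
have cp : 0 < c by rewrite /c divr_gt0 ?mulr_gt0.
have c2p : 0 < c2 by rewrite /c2 divr_gt0.
pose phi2 t := B * expR (- c * t) - u t `^ (- b1).
have Dphi2 : forall s, 0 < s < T -> is_derive s 1 phi2
    (B * (- c * expR (- c * s)) - (- b1 * u s `^ (- b1 - 1)
       * ((c2 * expR (c2 * s) * g s + expR (c2 * s) * g' s) + 0))).
  move=> s hs; have hs' := ltW' _ hs.
  exact: (DB (DC B (Dexp (- c) s)) (Dpow (- b1) (upos s hs') (DD (DM (Dexp c2 s) (gd s hs)) (Dcst k s)))).
have Pphi2 : forall s, 0 < s < T -> 0 <= (B * (- c * expR (- c * s)) - (- b1 * u s `^ (- b1 - 1)
       * ((c2 * expR (c2 * s) * g s + expR (c2 * s) * g' s) + 0))).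
  move=> s hs; have hs' := ltW' _ hs; have gt := gpos s hs'; have ft := fpos s hs'.
  have us := upos s hs'.
  have eu : c2 * expR (c2 * s) * g s + expR (c2 * s) * g' s + 0
      = expR (c2 * s) * ((q + 1) * Cq * f s `^ q).
    by rewrite -(eg s hs') /c2; ring.
  rewrite eu.
  suff H : B * c * expR (- c * s) <= b1 * u s `^ (- b1 - 1) * (expR (c2 * s) * ((q + 1) * Cq * f s `^ q)).
    move: H; lra.
  have h := star s hs'.
  rewrite -ler_ln; [|pos|pos].
  rewrite /B /c /b1 /c2; lnx.
  move: h; rewrite /u => h.
  apply: (@lin_le _ (q / (q + 1)) _ _ _ _ _ h); first by rewrite divr_ge0 ?ltW.
  by field; rewrite ?gt_eqF.
have u0 : u 0 = g0 + k by rewrite /u mulr0 expR0 mul1r eg0.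
have Cu : u x @[x --> 0^'+] --> u 0.
  rewrite /u; apply: cvgD; last exact: cvg_cst.
  apply: cvgM; last by rewrite eg0.
  exact: rc_cont (Dexp c2 0).
have Cphi2 : phi2 x @[x --> 0^'+] --> phi2 0.
  rewrite /phi2; apply: cvgB.
    apply: cvgM; first exact: cvg_cst.
    exact: rc_cont (Dexp (- c) 0).
  by apply: rc_pow => //; rewrite u0 addr_gt0.
have u0A : u 0 `^ (- b1) <= A.
  have hs := subadd g0p kp p1ge.
  rewrite kK /K (_ : g0 `^ (p + 1) + (Cq * Cp^-1 * f0 `^ (q + 1) - g0 `^ (p + 1))
     = Cq * Cp^-1 * f0 `^ (q + 1)) in hs; last by ring.
  rewrite -ler_ln in hs; [|pos|pos]; move: hs; lnx => hs.
  rewrite u0 -ler_ln; [|pos|pos].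
  rewrite /A /b1; lnx.
  apply: (@lin_le _ (b1 / (p + 1)) _ _ _ _ _ hs); first by rewrite divr_ge0 ?ltW.
  by rewrite /b1; field; rewrite ?gt_eqF.
have Psi : forall t, 0 <= t < T -> u t `^ (- b1) <= A - B * (1 - expR (- c * t)).
  move=> t ht; have := mono0 Dphi2 Pphi2 Cphi2 ht.
  rewrite /phi2 mulr0 expR0 mulr1; move: u0A; lra.
have Psipos : forall t, 0 <= t < T -> 0 < A - B * (1 - expR (- c * t)).
  by move=> t ht; apply: lt_le_trans (Psi t ht); rewrite powR_gt0 ?upos.
split.
  move=> t ht; have hP := Psi t ht; have hPp := Psipos t ht; have ut := upos t ht.
  suff H : (A - B * (1 - expR (- c * t))) `^ (- ((q + 1) / (p * q - 1))) <= u t.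
    by move: H; rewrite /u; lra.
  rewrite -ler_ln in hP; [|pos|pos]; rewrite ln_powR in hP.
  rewrite -ler_ln; [|pos|pos]; rewrite ln_powR.
  apply: (@lin_le _ ((q + 1) / (p * q - 1)) _ _ _ _ _ hP); first by rewrite divr_ge0 ?ltW.
  by rewrite /b1; field; rewrite ?gt_eqF.
have Ap : 0 < A by rewrite /A; pos.
have Bp : 0 < B by rewrite /B; pos.
have Mp : 0 < M by rewrite /M; pos.
have eM : M = A / B.
  have ABp : 0 < A / B by pos.
  rewrite -[LHS](@lnK _ M) ?posrE // -[RHS](@lnK _ (A / B)) ?posrE //; congr expR.
  rewrite /M /A /B; lnx.
  by field; rewrite ?gt_eqF.
have M1 : M < 1.
  rewrite -ltr_ln in H1; [|pos|pos]; move: H1; lnx => h.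
  rewrite -ltr_ln; [|pos|by rewrite posrE ltr01]; rewrite ln1 /M; lnx.
  apply: (@lin_lt _ ((p * q - 1) / (p + 1)) _ _ _ _ _ h); first by rewrite divr_gt0.
  by field; rewrite ?gt_eqF.
have Lp : 0 < 1 - M by rewrite subr_gt0.
have lnL : ln (1 - M) < 0 by apply: ln_lt0; apply/andP; split => //; move: Mp; lra.
rewrite leNgt; apply/negP => hT.
pose ts := - ((q + 1) * (p + 1) / (w * (p * q - 1))) * ln (1 - M).
have ts0 : 0 <= ts.
  rewrite /ts mulNr -mulrN; apply: mulr_ge0; first by apply: ltW; pos.
  by rewrite oppr_ge0 ltW.
have hts : 0 <= ts < T by rewrite ts0 /=; exact: hT.
have := Psipos ts hts.
have ec : - c * ts = ln (1 - M) by rewrite /ts /c; field; rewrite ?gt_eqF.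
rewrite ec lnK ?posrE // eM.
have -> : A - B * (1 - (1 - A / B)) = 0 by field; rewrite gt_eqF.
by rewrite ltxx.
Qed.
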